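(* The relation $\{(\rho,\sigma,\pi):\sigma=[n],\ \rho=[r],\text{ and the part } r \text{ appears in }\pi\text{ exactly }n\text{ times}\}$ is $\Pi_3$-definable in $\mathbf Y^*=\langle\mathcal P,\le,[1]+[1]\rangle$.
   Context: $\mathcal P$ is the set of all integer partitions, including the empty partition; a partition is a nonincreasing finite sequence of positive integers (its parts). $[n]$ denotes the partition with a single part $n$. Young's lattice $\mathbf Y=\langle\mathcal P,\le\rangle$ has $(s_1,\dots,s_r)\le(n_1,\dots,n_t)$ iff $r\le t$ and $s_i\le n_i$ for all $i\le r$; $\mathbf Y^*$ is $\mathbf Y$ with a constant symbol for the partition $(1,1)$. A relation is $\Pi_n$-definable if it is defined by a first-order formula in the language $\{\le,(1,1)\}$ in prenex form with $n$ alternating quantifier blocks, the outermost universal, and a quantifier-free matrix. *)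

(* Defs.v *)
From mathcomp Require Import all_boot.
Set Implicit Arguments. Unset Strict Implicit. Unset Printing Implicit Defensive.

Definition is_partition (s : seq nat) : bool :=
  sorted geq s && all (fun x => 0 < x) s.

Definition partition := {s : seq nat | is_partition s}.

Definition yle_seq (s t : seq nat) : bool :=
  (size s <= size t) && all (fun i => nth 0 s i <= nth 0 t i) (iota 0 (size s)).

Definition yle (p q : partition) : Prop := yle_seq (sval p) (sval q).

(* The constant (1,1) = [1]+[1]. *)
Lemma is_partition_11 : is_partition [:: 1; 1]. Proof. by []. Qed.
Definition part11 : partition := exist _ [:: 1; 1] is_partition_11.

Inductive term : Type :=
| TVar of nat
| TC11.

Inductive qf : Type :=
| QTrue | QFalse
| QLe of term & term
| QEq of term & term
| QNot of qf
| QAnd of qf & qf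
| QOr of qf & qf.

Definition env := nat -> partition.

Definition eval_term (e : env) (t : term) : partition :=
  match t with TVar i => e i | TC11 => part11 end.

Fixpoint qf_sat (e : env) (f : qf) : Prop :=
  match f with
  | QTrue => True
  | QFalse => False
  | QLe a b => yle (eval_term e a) (eval_term e b)
  | QEq a b => eval_term e a = eval_term e b
  | QNot g => ~ qf_sat e g
  | QAnd g h => qf_sat e g /\ qf_sat e h
  | QOr g h => qf_sat e g \/ qf_sat e h
  end.

Definition upd (e : env) (v : nat) (p : partition) : env :=
  fun i => if i == v then p else e i.

Fixpoint forall_block (vs : seq nat) (P : env -> Prop) (e : env) : Prop :=
  match vs with
  | [::] => P e
  | v :: vs' => forall p : partition, forall_block vs' P (upd e v p)
  end.

Fixpoint exists_block (vs : seq nat) (P : env -> Prop) (e : env) : Prop :=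
  match vs with
  | [::] => P e
  | v :: vs' => exists p : partition, exists_block vs' P (upd e v p)
  end.

Fixpoint prenex_sat (univ : bool) (blocks : seq (seq nat)) (f : qf) (e : env)
  : Prop :=
  match blocks with
  | [::] => qf_sat e f
  | vs :: rest =>
      if univ then forall_block vs (prenex_sat false rest f) e
      else exists_block vs (prenex_sat true rest f) e
  end.

Definition Pi_definable3 (n : nat) (R : partition -> partition -> partition -> Prop)
  : Prop :=
  exists (blocks : seq (seq nat)) (f : qf),
    size blocks = n /\
    forall e : env, R (e 0) (e 1) (e 2) <-> prenex_sat true blocks f e.

Definition rel_3_11 (rho sigma pi : partition) : Prop :=
  exists n r : nat,
    sval sigma = [:: n] /\ sval rho = [:: r] /\ count_mem r (sval pi) = n.

(* Main.v *)
Require Import Defs.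
From mathcomp Require Import all_boot zify.
Import Defs.
From Stdlib Require Import Classical.
Set Implicit Arguments. Unset Strict Implicit. Unset Printing Implicit Defensive.

Definition pf (p : partition) (i : nat) : nat := nth 0 (sval p) i.
Definition len (p : partition) : nat := size (sval p).

Lemma pf_pos p i : (0 < pf p i) = (i < len p).
Proof.
case: p => s Hp; case/andP: (Hp) => _ Hall; rewrite /pf /len /=.
case: (ltnP i (size s)) => Hi.
  by move/allP: Hall; apply; apply: mem_nth.
by rewrite nth_default.
Qed.

Lemma pf_mono p i j : i <= j -> pf p j <= pf p i.
Proof.
case: p => s Hp; case/andP: (Hp) => Hs _; rewrite /pf /= => Hij.
case: (ltnP j (size s)) => Hj; last by rewrite (nth_default _ Hj).
have Hi : i < size s by apply: leq_ltn_trans Hj.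
have := sorted_leq_nth (leT := geq) _ _ 0 Hs; apply => //.
- by move=> a b c /= H1 H2; apply: leq_trans H2 H1.
- by move=> a /=.
Qed.

Lemma yle_pf p q : yle p q <-> forall i, pf p i <= pf q i.
Proof.
rewrite /yle /yle_seq; split.
  case/andP=> Hs /allP Ha i.
  case: (ltnP i (size (sval p))) => Hi.
    by apply: (Ha i); rewrite mem_iota.
  by rewrite /pf nth_default.
move=> H; apply/andP; split.
  case: (leqP (size (sval p)) (size (sval q))) => // Hlt.
  have := H (size (sval q)).
  have := pf_pos p (size (sval q)); rewrite /len Hlt => Hp.
  have := pf_pos q (size (sval q)); rewrite /len ltnn.
  move: Hp; rewrite /pf; case: (nth 0 (sval p) _) => //= k _.
  by case: (nth 0 (sval q) _).
by apply/allP => i _; apply: H.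
Qed.

Lemma pf_inj p q : (forall i, pf p i = pf q i) -> p = q.
Proof.
move=> H; apply: val_inj.
have Hs : size (sval p) = size (sval q).
  apply/eqP; rewrite eqn_leq.
  have H1 := proj2 (yle_pf p q) (fun i => eq_leq (H i)).
  have H2 := proj2 (yle_pf q p) (fun i => eq_leq (esym (H i))).
  by case/andP: H1 => -> _; case/andP: H2 => ->.
by apply: (eq_from_nth (x0 := 0) Hs) => i _; apply: H.
Qed.

Lemma yle_antisym p q : yle p q -> yle q p -> p = q.
Proof.
move=> /yle_pf H1 /yle_pf H2; apply: pf_inj => i.
by apply/eqP; rewrite eqn_leq H1 H2.
Qed.

Lemma yle_refl p : yle p p.
Proof. by apply/yle_pf. Qed.

Lemma yle_trans p q s : yle p q -> yle q s -> yle p s.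
Proof. move=> /yle_pf H1 /yle_pf H2; apply/yle_pf => i; exact: leq_trans (H1 i) (H2 i). Qed.

Lemma nth_filter_pos (s : seq nat) i : sorted geq s ->
  nth 0 (filter (fun x => 0 < x) s) i = nth 0 s i.
Proof.
elim: s i => [|x s IH] i //= Hs.
have Hs' : sorted geq s by apply: (path_sorted Hs).
case: (posnP x) => Hx /=.
  have Hall := order_path_min (leT := geq) (fun a b c (H1 : b >= a) H2 => leq_trans H2 H1) Hs.
  have Hz : forall y, y \in s -> y = 0.
    by move=> y Hy; move/allP: Hall => /(_ y Hy) /=; rewrite Hx leqn0 => /eqP.
  have -> : filter (fun x => 0 < x) s = [::].
    apply/eqP; rewrite -(size_eq0); rewrite size_filter; apply/eqP.
    apply/eqP; rewrite -leqn0 leqNgt -has_count; apply/hasPn => y /Hz ->; by [].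
  case: i => [|i] /=; first by [].
  rewrite ?nth_nil.
  case: (ltnP i (size s)) => Hi; last by rewrite nth_default.
  by rewrite (Hz _ (mem_nth 0 Hi)).
case: i => [|i] //=; exact: IH.
Qed.

Definition mono (f : nat -> nat) := forall i, f i.+1 <= f i.

Lemma mkP_sorted f n m : mono f -> sorted geq (map f (iota m n)).
Proof.
move=> Hf; elim: n m => [|n IH] m //=.
case: n IH => [|n] IH //= ; rewrite Hf /=; exact: (IH m.+1).
Qed.

Lemma mkP_prop f n (Hf : mono f) : is_partition (filter (fun x => 0 < x) (map f (iota 0 n))).
Proof.
apply/andP; split; last by apply/allP => x; rewrite mem_filter => /andP [].
apply: sorted_filter; last exact: mkP_sorted.
by move=> a b c /= H1 H2; apply: leq_trans H2 H1.
Qed.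

Definition mkP f n (Hf : mono f) : partition := @exist _ (fun s => is_partition s) _ (mkP_prop n Hf).

Lemma pf_mkP f n (Hf : mono f) : (forall i, n <= i -> f i = 0) ->
  forall i, pf (mkP n Hf) i = f i.
Proof.
move=> Hn i; rewrite /pf /= nth_filter_pos; last exact: mkP_sorted.
case: (ltnP i n) => Hi.
  by rewrite (nth_map 0) ?size_iota // nth_iota.
by rewrite nth_default ?size_map ?size_iota // Hn.
Qed.

Definition rectf h w i := if i < h then w else 0.
Lemma rectf_mono h w : mono (rectf h w).
Proof. move=> i; rewrite /rectf; case: ifP; case: ifP => //; lia. Qed.
Definition rect h w : partition := mkP h (rectf_mono h w).
Lemma pf_rect h w i : pf (rect h w) i = if i < h then w else 0.
Proof. by rewrite pf_mkP // => j Hj; rewrite /rectf ltnNge Hj. Qed.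

Definition stair m : partition := mkP m (fun i => (leq_sub2l m (leqnSn i)) : (m - i.+1 <= m - i)).
Lemma pf_stair m i : pf (stair m) i = m - i.
Proof. by rewrite pf_mkP // => j Hj; apply/eqP; rewrite subn_eq0. Qed.

Definition decf p k i := if i == k then maxn (pf p i).-1 (pf p i.+1) else pf p i.
Lemma decf_mono p k : mono (decf p k).
Proof.
move=> i; rewrite /decf.
have H1 := pf_mono p (leqnSn i); have H2 := pf_mono p (leqnSn i.+1).
case: eqP => Hi; case: eqP => Hk; try lia.
Qed.
Definition decP p k : partition := mkP (len p) (decf_mono p k).
Lemma pf_decP p k i : pf (decP p k) i = decf p k i.
Proof.
rewrite pf_mkP // => j Hj; rewrite /decf.
have H1 : pf p j = 0 by apply/eqP; rewrite -leqn0 leqNgt pf_pos -leqNgt.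
have H2 : pf p j.+1 = 0 by apply/eqP; rewrite -leqn0 leqNgt pf_pos -leqNgt; lia.
by rewrite H1 H2; case: eqP.
Qed.

Definition incf p k i := if i == k then (if k is k'.+1 then minn (pf p k).+1 (pf p k') else (pf p 0).+1) else pf p i.
Lemma incf_mono p k : mono (incf p k).
Proof.
move=> i; rewrite /incf.
have H1 := pf_mono p (leqnSn i); have H2 := pf_mono p (leqnSn i.+1).
case: eqP => Hi; case: eqP => Hk; try lia.
- subst k; rewrite /=; lia.
- subst k; case: i Hi H1 H2 => [|i] Hi H1 H2 /=; first lia.
  have := pf_mono p (leqnSn i); lia.
Qed.
Definition incP p k : partition := mkP (len p).+1 (incf_mono p k).
Lemma pf_incP p k i : pf (incP p k) i = incf p k i.
Proof.
rewrite pf_mkP // => j Hj; rewrite /incf.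
have Hz : forall t, len p <= t -> pf p t = 0.
  by move=> t Ht; apply/eqP; rewrite -leqn0 leqNgt pf_pos -leqNgt.
case: eqP => Hjk; last by rewrite Hz //; lia.
subst k; case: j Hj => [|j] Hj; first lia.
rewrite (Hz j) //; lia.
Qed.

Definition lt (a b : partition) := yle a b /\ a <> b.
Definition cov (y x : partition) := lt y x /\ forall s, ~ (lt y s /\ lt s x).

Lemma pf_neq p q : p <> q -> exists i, pf p i <> pf q i.
Proof.
move=> H; apply: NNPP => Hn; apply: H; apply: pf_inj => i.
by apply: NNPP => Hi; apply: Hn; exists i.
Qed.

Lemma cov_iff y x : cov y x <-> exists i, pf x i = (pf y i).+1 /\ forall j, j != i -> pf x j = pf y j.
Proof.
split.
  case=> [[/yle_pf Hle Hne] Hno].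
  have Hex : exists j, pf y j < pf x j.
    case: (pf_neq Hne) => j Hj; exists j; have := Hle j; lia.
  case: (ex_minnP Hex) => i Hi Hmin.
  have Hbelow : forall k, k < i -> pf y k = pf x k.
    move=> k Hk; have := Hle k; case: (ltnP (pf y k) (pf x k)) => H; last lia.
    by have := Hmin _ H; lia.
  have Hz : forall j, pf (incP y i) j = if j == i then (pf y i).+1 else pf y j.
    move=> j; rewrite pf_incP /incf; case: eqP => [Hji|//]; subst j.
    case: i Hi Hmin Hbelow => [|k] Hi Hmin Hbelow //.
    have := Hbelow k (ltnSn k); have := pf_mono x (leqnSn k); lia.
  have Heq : incP y i = x.
    apply: NNPP => Hn; apply: (Hno (incP y i)); split.
      split; first by apply/yle_pf => j; rewrite Hz; case: eqP => [->|_]; [exact: leqnSn | exact: leqnn].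
      move=> Hc; have := f_equal (fun p => pf p i) Hc; rewrite /= Hz eqxx; lia.
    split=> //; apply/yle_pf => j; rewrite Hz; case: eqP => [->|_] //; exact: Hle.
  exists i; split; first by rewrite -Heq Hz eqxx.
  by move=> j Hj; rewrite -Heq Hz (negbTE Hj).
case=> i [Hi Hj].
have Hle : yle y x by apply/yle_pf => j; case: (eqVneq j i) => [->|/Hj ->]; lia.
split.
  split=> // Hc; subst; lia.
move=> s [[/yle_pf H1 H2] [/yle_pf H3 H4]].
have Hs : forall j, j != i -> pf s j = pf y j.
  move=> j /Hj Hx; have := H1 j; have := H3 j; lia.
case: (leqP (pf s i) (pf y i)) => Hsi.
  apply: H2; apply: pf_inj => j; case: (eqVneq j i) => [->|/Hs] //; have := H1 i; lia.
apply: H4; apply: pf_inj => j; case: (eqVneq j i) => [->|Hne]; first by have := H3 i; lia.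
by rewrite Hs // Hj.
Qed.

Definition rowp p := ~ yle part11 p.
Definition colp z := forall w, rowp w -> yle w z -> yle w part11.

Lemma pf11 i : pf part11 i = if i < 2 then 1 else 0.
Proof. by case: i => [|[|i]] //; rewrite /pf /= nth_nil. Qed.

Lemma rowp_iff p : rowp p <-> pf p 1 = 0.
Proof.
rewrite /rowp; split.
  move=> H; apply/eqP; rewrite -leqn0 leqNgt; apply/negP => Hp; apply: H.
  apply/yle_pf => i; rewrite pf11; case: ifP => // Hi.
  have H0 := pf_mono p (leq0n 1); case: i Hi => [|[|i]] //= _; lia.
move=> H /yle_pf /(_ 1); rewrite pf11 H.
by [].
Qed.

Lemma rowp_pf p i : rowp p -> 0 < i -> pf p i = 0.
Proof.
move=> /rowp_iff H Hi; have := pf_mono p Hi; rewrite H; lia.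
Qed.

Lemma le_pf0 p : pf p 0 = 0 -> forall i, pf p i = 0.
Proof. move=> H i; have := pf_mono p (leq0n i); lia. Qed.

Lemma rowp_rect k : rowp (rect 1 k).
Proof. by apply/rowp_iff; rewrite pf_rect. Qed.

Arguments rowp_rect : clear implicits.

Lemma row_rect p : rowp p -> p = rect 1 (pf p 0).
Proof.
move=> H; apply: pf_inj => i; rewrite pf_rect; case: i => [|i] //=.
exact: rowp_pf.
Qed.

Lemma yle_row_iff p q : rowp p -> (yle p q <-> pf p 0 <= pf q 0).
Proof.
move=> Hp; split; first by move/yle_pf; apply.
move=> H; apply/yle_pf => i; case: i => [|i] //; by rewrite rowp_pf.
Qed.

Lemma colp_iff z : colp z <-> pf z 0 <= 1.
Proof.
split.
  move=> H; have := H (rect 1 (pf z 0)) (rowp_rect _).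
  have Hle : yle (rect 1 (pf z 0)) z.
    by apply/(yle_row_iff _ (rowp_rect _)); rewrite pf_rect.
  by move=> /(_ Hle) /yle_pf /(_ 0); rewrite pf_rect pf11.
move=> H w Hw /yle_pf Hle; apply/(yle_row_iff _ Hw); rewrite pf11 /=.
exact: leq_trans (Hle 0) H.
Qed.

Lemma width_iff K r : rowp r ->
  (yle r K /\ (forall w, rowp w -> yle w K -> yle w r)) <-> pf K 0 = pf r 0.
Proof.
move=> Hr; split.
  case=> /yle_pf H1 H2.
  have := H2 (rect 1 (pf K 0)) (rowp_rect _).
  rewrite !(yle_row_iff _ (rowp_rect _)) !pf_rect /= => /(_ (leqnn _)).
  have := H1 0; lia.
move=> H; split; first by apply/(yle_row_iff _ Hr); rewrite H.
move=> w Hw /yle_pf /(_ 0) Hle; apply/(yle_row_iff _ Hw); by rewrite -H.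
Qed.

Lemma pf_len p i : len p <= i -> pf p i = 0.
Proof. by move=> H; apply/eqP; rewrite -leqn0 leqNgt pf_pos -leqNgt. Qed.

Lemma len_rect h w : 0 < w -> len (rect h w) = h.
Proof.
move=> Hw; apply/eqP; rewrite eqn_leq; apply/andP; split.
  case: (leqP (len (rect h w)) h) => // Hlt.
  by have := pf_pos (rect h w) h; rewrite Hlt pf_rect ltnn.
case: h => [|h] //; have := pf_pos (rect h.+1 w) h; by rewrite pf_rect ltnSn Hw.
Qed.

Lemma rect_col_le k K : yle (rect k 1) K <-> k <= len K.
Proof.
split.
  move/yle_pf=> H; case: k H => [|k] H //; have := H k; rewrite pf_rect ltnSn pf_pos; by [].
move=> H; apply/yle_pf => i; rewrite pf_rect; case: ifP => // Hi.
by rewrite pf_pos; apply: leq_trans H.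
Qed.

Lemma col_rect z : colp z -> z = rect (len z) 1.
Proof.
move/colp_iff=> H; apply: pf_inj => i; rewrite pf_rect.
have := pf_pos z i; have := pf_mono z (leq0n i); rewrite /len; case: ifP => _; lia.
Qed.

Lemma colp_rect k : colp (rect k 1).
Proof. by apply/colp_iff; rewrite pf_rect; case: ifP. Qed.

Arguments colp_rect : clear implicits.

Definition D1s r Rp := rowp Rp /\ ~ yle Rp r /\ forall z, rowp z -> yle z Rp -> z <> Rp -> yle z r.

Lemma D1s_iff r Rp : rowp r -> (D1s r Rp <-> Rp = rect 1 (pf r 0).+1).
Proof.
move=> Hr; split.
  case=> [HR [Hn Hz]]; rewrite (row_rect HR); congr rect.
  have H1 : pf r 0 < pf Rp 0 by rewrite ltnNge; apply/negP => H; apply: Hn; apply/(yle_row_iff _ HR).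
  case: (leqP (pf Rp 0) (pf r 0).+1) => H2; first lia.
  have := Hz (rect 1 (pf r 0).+1) (rowp_rect _).
  rewrite (yle_row_iff _ (rowp_rect _)) !pf_rect /= => /(_ (ltnW H2)).
  have Hne : rect 1 (pf r 0).+1 <> Rp.
    by move=> Hc; move: H2; rewrite -Hc pf_rect /=; lia.
  by move=> /(_ Hne) /(yle_row_iff _ (rowp_rect _)); rewrite pf_rect /=; lia.
move=> ->; split; first exact: rowp_rect.
split; first by rewrite (yle_row_iff _ (rowp_rect _)) pf_rect /=; lia.
move=> z Hz; rewrite (yle_row_iff _ Hz) pf_rect /= => Hle Hne.
apply/(yle_row_iff _ Hz).
case: (leqP (pf z 0) (pf r 0)) => // Hlt; exfalso; apply: Hne.
rewrite (row_rect Hz); congr rect; lia.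
Qed.

Definition minnot K x y := yle K x /\ ~ yle K y /\ forall z, yle z x -> ~ yle z y -> yle K z.

Lemma not_yle z y : ~ yle z y -> exists j, pf y j < pf z j.
Proof.
move=> H; apply: NNPP => Hn; apply: H; apply/yle_pf => j.
by rewrite leqNgt; apply/negP => Hj; apply: Hn; exists j.
Qed.

Lemma minnot_iff K x y i :
  pf x i = (pf y i).+1 -> (forall j, j != i -> pf x j = pf y j) ->
  (minnot K x y <-> K = rect i.+1 (pf x i)).
Proof.
move=> Hi Hj.
have Hgood : minnot (rect i.+1 (pf x i)) x y.
  split.
    apply/yle_pf => j; rewrite pf_rect; case: ifP => // Hji; apply: pf_mono; lia.
  split.
    by move/yle_pf/(_ i); rewrite pf_rect ltnSn Hi ltnn.
  move=> z /yle_pf Hzx /not_yle [j Hjz].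
  have Hji : j = i.
    apply/eqP; apply: contraT => /Hj Hx; have := Hzx j; lia.
  subst j; apply/yle_pf => k; rewrite pf_rect; case: ifP => // Hk.
  have := pf_mono z (_ : k <= i); have := Hzx i; lia.
split; last by move=> ->.
case=> [H1 [H2 H3]]; case: Hgood => [G1 [G2 G3]].
apply: yle_antisym; [exact: H3 | exact: G3].
Qed.

Arguments rowp_rect : clear implicits.
Arguments colp_rect : clear implicits.

Definition cnt (p : partition) k := count (fun x => k <= x) (sval p).

Lemma cnt_seq (s : seq nat) k i : sorted geq s -> 0 < k ->
  (k <= nth 0 s i) = (i < count (fun x => k <= x) s).
Proof.
elim: s i => [|x s IH] i Hs Hk /=; first by rewrite nth_nil; case: k Hk.
have Hs' : sorted geq s by apply: (path_sorted Hs).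
case: (leqP k x) => Hkx /=.
  by case: i => [|i] //=; rewrite IH.
have Hall := order_path_min (leT := geq) (fun a b c (H1 : b >= a) H2 => leq_trans H2 H1) Hs.
have -> : count (fun x => k <= x) s = 0.
  apply/eqP; rewrite -leqn0 leqNgt -has_count; apply/hasPn => y Hy.
  move/allP: Hall => /(_ y Hy) /= Hyx; rewrite -ltnNge; exact: leq_ltn_trans Hyx Hkx.
rewrite add0n ltn0; case: i => [|i] /=; first by rewrite leqNgt Hkx.
case: (ltnP i (size s)) => Hi; last by rewrite nth_default //; apply/negbTE; rewrite -ltnNge.
move/allP: Hall => /(_ _ (mem_nth 0 Hi)) /= Hyx; apply/negbTE; rewrite -ltnNge.
exact: leq_ltn_trans Hyx Hkx.
Qed.

Lemma cnt_iff p k i : 0 < k -> (k <= pf p i) = (i < cnt p k).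
Proof.
move=> Hk; case: p => s Hp; rewrite /pf /cnt /=; case/andP: (Hp) => Hs _.
exact: cnt_seq.
Qed.

Lemma count_mem_cnt p r : count_mem r (sval p) = cnt p r - cnt p r.+1.
Proof.
rewrite /cnt; elim: (sval p) => [|x s IH] //=.
have : count (fun x0 => r.+1 <= x0) s <= count (fun x0 => r <= x0) s.
  by apply: sub_count => y /= Hy; apply: ltnW.
rewrite IH; case: (ltngtP r x) => H1 /=; lia.
Qed.

Lemma pf_rect0 h w : pf (rect h w) 0 = if 0 < h then w else 0.
Proof. by rewrite pf_rect. Qed.

Definition D2s pi r d KA := cov d pi /\ minnot KA pi d /\ yle r KA /\ (forall w, rowp w -> yle w KA -> yle w r).

Lemma D2s_sem pi r d KA : rowp r -> D2s pi r d KA ->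
  0 < pf r 0 /\ cnt pi (pf r 0).+1 < cnt pi (pf r 0) /\ KA = rect (cnt pi (pf r 0)) (pf r 0).
Proof.
move=> Hr [/cov_iff [i [Hi Hj]] [Hm Hw]].
have HK := proj1 (minnot_iff KA Hi Hj) Hm; subst KA.
have := proj1 (width_iff _ Hr) Hw; rewrite pf_rect /= => Hpi.
have Hr0 : 0 < pf r 0 by rewrite -Hpi Hi.
have Hd := pf_mono d (leqnSn i).
have Hi1 : pf pi i.+1 < pf r 0.
  rewrite Hj; last by rewrite neq_ltn ltnSn orbT.
  lia.
have HA : cnt pi (pf r 0) = i.+1.
  apply/eqP; rewrite eqn_leq; apply/andP; split.
    by rewrite leqNgt -cnt_iff // -ltnNge.
  by rewrite -cnt_iff // Hpi.
have HB : cnt pi (pf r 0).+1 <= i.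
  by rewrite leqNgt -cnt_iff // Hpi ltnn.
rewrite HA Hpi; split; first exact: Hr0.
split; first lia.
by [].
Qed.

Lemma D2s_ex pi r : rowp r -> 0 < pf r 0 -> cnt pi (pf r 0).+1 < cnt pi (pf r 0) ->
  exists d, D2s pi r d (rect (cnt pi (pf r 0)) (pf r 0)).
Proof.
move=> Hr Hr0 Hlt.
move: Hlt; move EA: (cnt pi (pf r 0)) => A; move ER: (pf r 0) => R Hlt.
have HA : 0 < A by lia.
have H1 : R <= pf pi A.-1 by rewrite -ER cnt_iff // EA; lia.
have H2 : ~~ (R.+1 <= pf pi A.-1) by rewrite cnt_iff //; lia.
have Hpi : pf pi A.-1 = R by lia.
have Hnext : pf pi A < R.
  by rewrite ltnNge -ER cnt_iff // EA ltnn.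
exists (decP pi A.-1); split.
  apply/cov_iff; exists A.-1; split.
    rewrite pf_decP /decf eqxx; rewrite (_ : A.-1.+1 = A); lia.
  by move=> j Hj; rewrite pf_decP /decf (negbTE Hj).
split.
  apply/(minnot_iff _ (i := A.-1)).
  - rewrite pf_decP /decf eqxx (_ : A.-1.+1 = A); lia.
  - by move=> j Hj; rewrite pf_decP /decf (negbTE Hj).
  - by rewrite Hpi prednK.
apply/(width_iff _ Hr); rewrite pf_rect HA.
by [].
Qed.

Definition D3s pi Rp c KB := cov pi c /\ minnot KB c pi /\ yle Rp KB /\ (forall w, rowp w -> yle w KB -> yle w Rp).

Lemma D3s_sem pi R c KB : D3s pi (rect 1 R.+1) c KB -> KB = rect (cnt pi R.+1).+1 R.+1.
Proof.
move=> [/cov_iff [i [Hi Hj]] [Hm Hw]].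
have HK := proj1 (minnot_iff KB Hi Hj) Hm; subst KB.
have := proj1 (width_iff _ (rowp_rect _)) Hw; rewrite !pf_rect /= => Hc.
have Hpi : pf pi i = R by lia.
have HB : cnt pi R.+1 = i.
  apply/eqP; rewrite eqn_leq; apply/andP; split.
    by rewrite leqNgt -cnt_iff // Hpi ltnn.
  destruct i as [|k]; first by [].
  rewrite -cnt_iff //.
  have := pf_mono c (leqnSn k); rewrite (Hj k); last by rewrite neq_ltn ltnSn.
  lia.
by rewrite HB Hc.
Qed.

Lemma D3s_ex pi R : cnt pi R.+1 < cnt pi R -> 0 < R ->
  exists c, D3s pi (rect 1 R.+1) c (rect (cnt pi R.+1).+1 R.+1).
Proof.
move=> Hlt HR; set B := cnt pi R.+1.
have Hpi : pf pi B = R.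
  apply/eqP; rewrite eqn_leq; apply/andP; split.
    by rewrite -ltnS ltnNge cnt_iff // ltnn.
  by rewrite cnt_iff.
have Hc : pf (incP pi B) B = R.+1.
  rewrite pf_incP /incf eqxx; case E: B => [|k] //=; first by rewrite -E Hpi.
  rewrite -E Hpi; have : k < B by rewrite E.
  rewrite -cnt_iff // => Hk; lia.
have Hoth : forall j, j != B -> pf (incP pi B) j = pf pi j.
  by move=> j Hj; rewrite pf_incP /incf (negbTE Hj).
exists (incP pi B); split.
  by apply/cov_iff; exists B; rewrite Hc Hpi.
split.
  by apply/(minnot_iff _ (i := B)); rewrite ?Hc ?Hpi.
apply/(width_iff _ (rowp_rect _)); rewrite !pf_rect.
by [].
Qed.

Arguments rowp_rect : clear implicits.
Arguments colp_rect : clear implicits.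

Definition D4s CA K := colp CA /\ yle CA K /\ forall z, colp z -> yle z K -> yle z CA.

Lemma D4s_iff CA K : D4s CA K <-> CA = rect (len K) 1.
Proof.
split.
  case=> [Hc [Hle Hmax]].
  rewrite (col_rect Hc); congr rect.
  have := proj1 (rect_col_le _ _) (Hmax _ (colp_rect (len K)) (proj2 (rect_col_le _ _) (leqnn _))).
  have := proj1 (rect_col_le _ _) (eq_ind _ (fun z => yle z K) Hle _ (col_rect Hc)).
  lia.
move=> ->; split; first exact: colp_rect.
split; first by apply/rect_col_le.
move=> z Hz; rewrite (col_rect Hz) !rect_col_le len_rect //.
Qed.

Definition JI K := forall u v, lt u K -> lt v K -> exists t, yle u t /\ yle v t /\ lt t K.

Lemma JI_rect h w : JI (rect h w).
Proof.
move=> u v [Hu Hu'] [Hv Hv'].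
case: (posnP h) => Hh.
  exfalso; apply: Hu'; apply: yle_antisym => //; apply/yle_pf => i; rewrite pf_rect Hh; by [].
case: (posnP w) => Hw.
  exfalso; apply: Hu'; apply: yle_antisym => //; apply/yle_pf => i; rewrite pf_rect Hw; by case: ifP.
have Ht : forall i, pf (decP (rect h w) h.-1) i = if i == h.-1 then w.-1 else if i < h then w else 0.
  move=> i; rewrite pf_decP /decf !pf_rect; case: eqP => [->|] //.
  rewrite prednK // ltnn; case: ifP; lia.
have Hgood : forall x, lt x (rect h w) -> yle x (decP (rect h w) h.-1).
  move=> x [/yle_pf Hx Hx']; apply/yle_pf => i; rewrite Ht.
  case: eqP => [Hi|Hi]; last by have := Hx i; rewrite pf_rect.
  subst i; case: (leqP (pf x h.-1) w.-1) => // Hlt; exfalso; apply: Hx'.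
  apply: pf_inj => i; rewrite pf_rect; case: ifP => Hi.
    have Hih : i <= h.-1 by lia.
    have := pf_mono x Hih; have := Hx i; rewrite pf_rect Hi => A B.
    apply/eqP; rewrite eqn_leq A /=; apply: leq_trans B; rewrite -(prednK Hw); exact: Hlt.
  have := Hx i; rewrite pf_rect Hi; lia.
exists (decP (rect h w) h.-1); split; first exact: Hgood.
split; first exact: Hgood.
split; first by apply/yle_pf => i; rewrite Ht pf_rect; case: eqP => [->|]; [rewrite ltn_predL Hh; exact: leq_pred | by case: ifP].
move=> Hc; have := Ht h.-1; rewrite Hc eqxx pf_rect ltn_predL Hh.
by case: (w) Hw => //= k _; lia.
Qed.

Lemma JI_sem K : JI K -> forall i, i < len K -> pf K i = pf K 0.
Proof.
move=> HJ i Hi; apply: NNPP => Hne.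
have Hex : exists i, (i < len K) && (pf K i != pf K 0).
  by exists i; rewrite Hi /=; apply/eqP.
case: (ex_minnP Hex) => i0 /andP [Hi0 Hne0] Hmin.
have Hi0pos : 0 < i0 by case: i0 Hi0 Hne0 {Hmin} => //; rewrite eqxx.
set j := i0.-1.
have Hj : j.+1 = i0 by rewrite /j prednK.
have HKj : pf K j = pf K 0.
  apply: NNPP => Hc; have := Hmin j; rewrite (_ : j < len K) /=; last by rewrite -Hj in Hi0; lia.
  move=> /(_ (introN eqP Hc)); rewrite -Hj; lia.
have Hlt0 : pf K i0 < pf K j.
  have := pf_mono K (leqnSn j); rewrite Hj HKj => H; move/eqP: Hne0; lia.
have [L EL] : exists L, len K = L by eauto.
rewrite EL in Hi Hi0.
have HL : 0 < L by lia.
have HL1 : L.-1.+1 = L by rewrite prednK.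
have HKL : 0 < pf K L.-1 by rewrite pf_pos EL ltn_predL.
have HKL0 : pf K L = 0 by rewrite pf_len // EL.
have Hjl : j != L.-1 by apply/eqP => E; rewrite -Hj E HL1 in Hi0; rewrite ltnn in Hi0.
have Hu : forall k, pf (decP K j) k = if k == j then (pf K j).-1 else pf K k.
  move=> k; rewrite pf_decP /decf; case: eqP => [->|] //; rewrite Hj; lia.
have Hv : forall k, pf (decP K L.-1) k = if k == L.-1 then (pf K L.-1).-1 else pf K k.
  move=> k; rewrite pf_decP /decf; case: eqP => [->|] //; rewrite HL1 HKL0; lia.
have Hlt : forall k, (pf K k).-1 <= pf K k by move=> k; exact: leq_pred.
have [t [Ht1 [Ht2 [Ht3 Ht4]]]] : exists t, yle (decP K j) t /\ yle (decP K L.-1) t /\ lt t K.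
  apply: HJ.
    split; first by apply/yle_pf => k; rewrite Hu; case: eqP => [->|_] //; exact: leq_pred.
    move=> Hc; have := Hu j; rewrite Hc eqxx; lia.
  split; first by apply/yle_pf => k; rewrite Hv; case: eqP => [->|_] //; exact: leq_pred.
  move=> Hc; have := Hv L.-1; rewrite Hc eqxx; lia.
apply: Ht4; apply: yle_antisym => //; apply/yle_pf => k.
move/yle_pf: Ht1 => /(_ k); move/yle_pf: Ht2 => /(_ k); rewrite Hu Hv.
case: (eqVneq k j) => [->|Hkj]; first by rewrite (negbTE Hjl).
by [].
Qed.

Definition D6s s KB RB := yle s RB /\ (forall w, rowp w -> yle w RB -> yle w s) /\
  (forall z, colp z -> (yle z RB <-> yle z KB)) /\ JI RB.

Lemma D6s_iff s KB RB : rowp s -> 0 < pf s 0 -> 0 < len KB ->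
  (D6s s KB RB <-> RB = rect (len KB) (pf s 0)).
Proof.
move=> Hs Hs0 HKB; split.
  case=> [H1 [H2 [H3 H4]]].
  have Hw := proj1 (width_iff _ Hs) (conj H1 H2).
  have Hlen : len RB = len KB.
    have E := H3 _ (colp_rect (len RB)); have E' := H3 _ (colp_rect (len KB)).
    rewrite !rect_col_le in E E'; apply/eqP; rewrite eqn_leq.
    by rewrite (proj1 E (leqnn _)) (proj2 E' (leqnn _)).
  apply: pf_inj => i; rewrite pf_rect -Hlen; case: ifP => Hi.
    by rewrite (JI_sem H4 Hi).
  by rewrite pf_len // leqNgt Hi.
move=> ->.
have HW : pf (rect (len KB) (pf s 0)) 0 = pf s 0 by rewrite pf_rect HKB.
case: (proj2 (width_iff _ Hs) HW) => W1 W2.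
split => //; split => //.
split; last exact: JI_rect.
move=> z Hz; rewrite (col_rect Hz) !rect_col_le len_rect //.
Qed.

Definition D7s x := forall y w, cov w y -> cov y x ->
  exists v, yle w v /\ yle v x /\ v <> w /\ v <> x /\ v <> y.

Lemma neq_pf p q i : pf p i <> pf q i -> p <> q.
Proof. by move=> H E; apply: H; rewrite E. Qed.

Lemma stair_D7 m : D7s (stair m).
Proof.
move=> y w /cov_iff [k [Hk Hk']] /cov_iff [i [Hi Hi']].
rewrite pf_stair in Hi; have Hx : forall j, pf (stair m) j = m - j by move=> j; rewrite pf_stair.
have Hki : k != i.
  apply/eqP => E; subst k.
  have := pf_mono w (leqnSn i).
  rewrite -(Hk' i.+1); last by rewrite neq_ltn ltnSn orbT.
  rewrite -(Hi' i.+1); last by rewrite neq_ltn ltnSn orbT.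
  rewrite Hx; lia.
have Hyk : pf y k = m - k by rewrite -(Hi' k Hki) Hx.
have Hkm : k < m by lia.
have Hv : forall j, pf (decP (stair m) k) j = if j == k then m - j - 1 else m - j.
  move=> j; rewrite pf_decP /decf !Hx; case: eqP => [->|] //; lia.
exists (decP (stair m) k); split.
  apply/yle_pf => j; rewrite Hv; case: (eqVneq j k) => [E|Hjk]; first by subst j; lia.
  case: (eqVneq j i) => [E|Hji]; first by subst j; rewrite -(Hk' i); [lia | rewrite eq_sym].
  by rewrite -(Hk' j Hjk) -(Hi' j Hji) Hx.
split; first by apply/yle_pf => j; rewrite Hv Hx; case: eqP => _; lia.
have Hik : i != k by rewrite eq_sym.
have Hwi : pf w i = pf y i by rewrite (Hk' i).
split; first by apply: (neq_pf (i := i)); rewrite Hv (negbTE Hik) Hwi; lia.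
split; first by apply: (neq_pf (i := k)); rewrite Hv eqxx Hx; lia.
by apply: (neq_pf (i := k)); rewrite Hv eqxx; lia.
Qed.

Lemma decP_val p k : pf p k.+1 < pf p k ->
  forall j, pf (decP p k) j = if j == k then (pf p k).-1 else pf p j.
Proof. move=> H j; rewrite pf_decP /decf; case: eqP => [->|] //; lia. Qed.

Lemma cov_dec p k : pf p k.+1 < pf p k -> cov (decP p k) p.
Proof.
move=> H; apply/cov_iff; exists k; rewrite !(decP_val H) eqxx; split; first lia.
by move=> j Hj; rewrite (decP_val H) (negbTE Hj).
Qed.

Lemma Sn_neq i : (i.+1 == i) = false.
Proof. by apply/negbTE; rewrite neq_ltn ltnSn orbT. Qed.
Lemma nS_neq i : (i == i.+1) = false.
Proof. by apply/negbTE; rewrite neq_ltn ltnSn. Qed.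

Lemma D7_stair x : D7s x -> exists m, x = stair m.
Proof.
move=> HD.
(* no horizontal domino *)
have Hh : forall i, pf x i <= (pf x i.+1).+1.
  move=> i; rewrite leqNgt; apply/negP => Hlt.
  have H1 : pf x i.+1 < pf x i by lia.
  have Hy := decP_val H1.
  have H2 : pf (decP x i) i.+1 < pf (decP x i) i by rewrite !Hy eqxx Sn_neq; lia.
  have Hw := decP_val H2.
  have [v [Hwv [Hvx [Hvw [Hvx' Hvy]]]]] := HD _ _ (cov_dec H2) (cov_dec H1).
  move/yle_pf: Hwv => Hwv; move/yle_pf: Hvx => Hvx.
  have Hvj : forall j, j != i -> pf v j = pf x j.
    move=> j Hj; have := Hwv j; have := Hvx j; rewrite Hw !Hy !(negbTE Hj); lia.
  have Hvi1 := Hwv i; have Hvi2 := Hvx i; rewrite Hw !Hy eqxx in Hvi1.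
  case: (ltngtP (pf v i) (pf x i)) => Hc; last first.
  - by apply: Hvx'; apply: pf_inj => j; case: (eqVneq j i) => [E|Hj]; [subst j | rewrite Hvj].
  - by lia.
  case: (ltngtP (pf v i) (pf x i).-1) => Hc2.
  - apply: Hvw; apply: pf_inj => j; rewrite Hw !Hy; case: (eqVneq j i) => [E|Hj]; [subst j; rewrite ?eqxx; lia | by rewrite Hvj].
  - lia.
  - apply: Hvy; apply: pf_inj => j; rewrite Hy; case: (eqVneq j i) => [E|Hj]; [by subst j | by rewrite Hvj].
(* no vertical domino *)
have Hv : forall i, i < len x -> pf x i != pf x i.+1.
  move=> i Hi; apply/negP => /eqP Heq.
  have Hex : exists j, (j < len x) && (pf x j == pf x j.+1) by exists i; rewrite Hi Heq eqxx.
  have Hbd : forall j, (j < len x) && (pf x j == pf x j.+1) -> j <= len x by move=> j /andP [/ltnW].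
  case: (ex_maxnP Hex Hbd) => j /andP [Hj /eqP Hjeq] Hmax.
  have Hxj : 0 < pf x j by rewrite pf_pos.
  have Hj1 : j.+1 < len x by rewrite -pf_pos -Hjeq.
  have Hj2 : pf x j.+2 < pf x j.+1.
    have := pf_mono x (leqnSn j.+1); case: (ltngtP (pf x j.+2) (pf x j.+1)) => // E _.
    by have := Hmax j.+1; rewrite Hj1 E eqxx /= => /(_ isT); rewrite ltnn.
  have Hy := decP_val Hj2.
  have H2 : pf (decP x j.+1) j.+1 < pf (decP x j.+1) j by rewrite !Hy eqxx nS_neq; lia.
  have Hw := decP_val H2.
  have [v [Hwv [Hvx [Hvw [Hvx' Hvy]]]]] := HD _ _ (cov_dec H2) (cov_dec Hj2).
  move/yle_pf: Hwv => Hwv; move/yle_pf: Hvx => Hvx.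
  have Hvk : forall k, k != j -> k != j.+1 -> pf v k = pf x k.
    move=> k Hk Hk'; have := Hwv k; have := Hvx k; rewrite Hw !Hy !(negbTE Hk) !(negbTE Hk'); lia.
  have A1 := Hwv j; have A2 := Hvx j; have A3 := Hwv j.+1; have A4 := Hvx j.+1.
  rewrite Hw !Hy eqxx !nS_neq in A1; rewrite Hw !Hy eqxx !Sn_neq in A3.
  have Hmv := pf_mono v (leqnSn j).
  have Hcase : forall a b, pf v j = a -> pf v j.+1 = b -> forall p, pf p j = a -> pf p j.+1 = b ->
     (forall k, k != j -> k != j.+1 -> pf p k = pf x k) -> v = p.
    move=> a b Ea Eb p Pa Pb Pk; apply: pf_inj => k.
    case: (eqVneq k j) => [E|Hk]; first by subst k; rewrite Ea Pa.
    case: (eqVneq k j.+1) => [E|Hk']; first by subst k; rewrite Eb Pb.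
    by rewrite Hvk // Pk.
  case: (ltngtP (pf v j) (pf x j)) => Hc; last first.
  - case: (ltngtP (pf v j.+1) (pf x j.+1)) => Hc'; last first.
    + by apply: Hvx'; apply: (Hcase _ _ Hc Hc').
    + lia.
    + apply: Hvy; apply: (Hcase (pf x j) (pf x j.+1).-1 Hc _); rewrite ?Hy ?eqxx ?nS_neq //; first lia.
      by move=> k Hk Hk'; rewrite Hy (negbTE Hk').
  - lia.
  - apply: Hvw; apply: (Hcase (pf x j).-1 (pf x j.+1).-1); rewrite ?Hw ?Hy ?eqxx ?nS_neq ?Sn_neq //; try lia.
    by move=> k Hk Hk'; rewrite Hw !Hy !(negbTE Hk) !(negbTE Hk').
have Hstep : forall i, i < len x -> pf x i = (pf x i.+1).+1.
  move=> i Hi; have := Hh i; have := Hv i Hi; have := pf_mono x (leqnSn i); move=> A /eqP B C; lia.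
exists (len x).
have Ht : forall t, t <= len x -> pf x (len x - t) = t.
  elim=> [|t IH] Ht; first by rewrite subn0 pf_len.
  rewrite Hstep; last lia.
  by rewrite (_ : (len x - t.+1).+1 = len x - t) ?IH //; lia.
apply: pf_inj => j; rewrite pf_stair.
case: (leqP j (len x)) => Hj.
  by rewrite -{1}(subKn Hj) Ht // leq_subr.
rewrite pf_len; lia.
Qed.

Lemma D7s_iff x : D7s x <-> exists m, x = stair m.
Proof. split; [exact: D7_stair | by case=> m ->; exact: stair_D7]. Qed.

Lemma rect_stair h w m : 0 < h -> 0 < w -> (yle (rect h w) (stair m) <-> h.-1 + w <= m).
Proof.
move=> Hh Hw; split.
  move/yle_pf/(_ h.-1); rewrite pf_rect pf_stair ltn_predL Hh; lia.
move=> H; apply/yle_pf => i; rewrite pf_rect pf_stair; case: ifP => // Hi; lia.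
Qed.

Definition V := TVar.
Definition Le a b := QLe (V a) (V b).
Definition Eqv a b := QEq (V a) (V b).
Definition Imp p q := QOr (QNot p) q.
Definition Lt a b := QAnd (Le a b) (QNot (Eqv a b)).
Definition Row t := QNot (QLe TC11 (V t)).
Definition Le11 t := QLe (V t) TC11.
Definition A3 a b c := QAnd a (QAnd b c).

Definition m1 r Rp z1 := A3 (Row Rp) (QNot (Le Rp r)) (Imp (A3 (Row z1) (Le z1 Rp) (QNot (Eqv z1 Rp))) (Le z1 r)).
Definition m2 pi r d KA z2 z3 z4 :=
  QAnd (Lt d pi) (QAnd (QNot (QAnd (Lt d z2) (Lt z2 pi))) (QAnd (Le KA pi) (QAnd (QNot (Le KA d))
   (QAnd (Imp (QAnd (Le z3 pi) (QNot (Le z3 d))) (Le KA z3)) (QAnd (Le r KA) (Imp (QAnd (Row z4) (Le z4 KA)) (Le z4 r))))))).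
Definition m3 pi Rp c KB z5 z6 z7 :=
  QAnd (Lt pi c) (QAnd (QNot (QAnd (Lt pi z5) (Lt z5 c))) (QAnd (Le KB c) (QAnd (QNot (Le KB pi))
   (QAnd (Imp (QAnd (Le z6 c) (QNot (Le z6 pi))) (Le KB z6)) (QAnd (Le Rp KB) (Imp (QAnd (Row z7) (Le z7 KB)) (Le z7 Rp))))))).
Definition m4 CA KA w9 z8 w10 :=
  A3 (Imp (QAnd (Row w9) (Le w9 CA)) (Le11 w9)) (Le CA KA)
     (QOr (A3 (Row w10) (Le w10 z8) (QNot (Le11 w10))) (QOr (QNot (Le z8 KA)) (Le z8 CA))).
Definition m6 s KB RB w14 z15 u v w16 t :=
  QAnd (Le s RB) (A3 (Imp (QAnd (Row w14) (Le w14 RB)) (Le w14 s))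
     (QOr (A3 (Row w16) (Le w16 z15) (QNot (Le11 w16))) (QAnd (Imp (Le z15 RB) (Le z15 KB)) (Imp (Le z15 KB) (Le z15 RB))))
     (Imp (QAnd (Lt u RB) (Lt v RB)) (A3 (Le u t) (Le v t) (Lt t RB)))).
Definition m7 x y w s s' vv :=
  Imp (QAnd (Lt w y) (A3 (QNot (QAnd (Lt w s) (Lt s y))) (Lt y x) (QNot (QAnd (Lt y s') (Lt s' x)))))
      (QAnd (Le w vv) (QAnd (Le vv x) (A3 (QNot (Eqv vv w)) (QNot (Eqv vv x)) (QNot (Eqv vv y))))).
Definition mB CA RB x := QAnd (Imp (Le CA x) (Le RB x)) (Imp (Le RB x) (Le CA x)).
Definition mE s r pi a d KA z2 z3 z4 := QAnd (Row s) (A3 (Row r) (QNot (Le s a)) (m2 pi r d KA z2 z3 z4)).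

Definition Mat : qf :=
  QAnd
  (QOr (QNot (m1 0 3 11)) (QOr (QNot (m2 2 0 4 5 12 13 14)) (QOr (QNot (m3 2 3 6 7 15 16 17))
  (QOr (QNot (m4 8 5 18 19 29)) (QOr (QNot (m6 1 7 9 20 21 22 23 30 31))
  (QOr (QNot (m7 10 24 25 32 33 34)) (mB 8 9 10)))))))
  (mE 1 0 2 26 27 28 35 36 37).

Definition Ublk := [:: 3; 4; 5; 6; 7; 8; 9; 10].
Definition Xblk := [:: 11; 12; 13; 14; 15; 16; 17; 18; 19; 20; 21; 22; 23; 24; 25; 26; 27; 28].
Definition Zblk := [:: 29; 30; 31; 32; 33; 34; 35; 36; 37].

Definition env_of (l : seq partition) : env := fun i => nth part11 l i.

Definition M1 r Rp z1 := qf_sat (env_of [:: r; Rp; z1]) (m1 0 1 2).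
Definition M2 pi r d KA z2 z3 z4 := qf_sat (env_of [:: pi; r; d; KA; z2; z3; z4]) (m2 0 1 2 3 4 5 6).
Definition M3 pi Rp c KB z5 z6 z7 := qf_sat (env_of [:: pi; Rp; c; KB; z5; z6; z7]) (m3 0 1 2 3 4 5 6).
Definition M4 CA KA w9 z8 w10 := qf_sat (env_of [:: CA; KA; w9; z8; w10]) (m4 0 1 2 3 4).
Definition M6 s KB RB w14 z15 u v w16 t := qf_sat (env_of [:: s; KB; RB; w14; z15; u; v; w16; t]) (m6 0 1 2 3 4 5 6 7 8).
Definition M7 x y w s s' vv := qf_sat (env_of [:: x; y; w; s; s'; vv]) (m7 0 1 2 3 4 5).
Definition MB CA RB x := qf_sat (env_of [:: CA; RB; x]) (mB 0 1 2).
Definition ME s r pi a d KA z2 z3 z4 := qf_sat (env_of [:: s; r; pi; a; d; KA; z2; z3; z4]) (mE 0 1 2 3 4 5 6 7 8).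

Lemma key (e : env) :
  prenex_sat true [:: Ublk; Xblk; Zblk] Mat e <->
  forall Rp d KA c KB CA RB x : partition,
  exists z1 z2 z3 z4 z5 z6 z7 w9 z8 w14 z15 u v y w a d' KA' : partition,
  forall w10 w16 t s s' vv z2' z3' z4' : partition,
  ((~ M1 (e 0) Rp z1 \/ ~ M2 (e 2) (e 0) d KA z2 z3 z4 \/ ~ M3 (e 2) Rp c KB z5 z6 z7 \/
    ~ M4 CA KA w9 z8 w10 \/ ~ M6 (e 1) KB RB w14 z15 u v w16 t \/ ~ M7 x y w s s' vv \/ MB CA RB x)
   /\ ME (e 1) (e 0) (e 2) a d' KA' z2' z3' z4').
Proof. exact: iff_refl. Qed.

Lemma M1E r Rp z1 : M1 r Rp z1 <-> rowp Rp /\ ~ yle Rp r /\ (~ (rowp z1 /\ yle z1 Rp /\ z1 <> Rp) \/ yle z1 r).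
Proof. exact: iff_refl. Qed.

Lemma D1_iff r Rp : (forall z1, M1 r Rp z1) <-> D1s r Rp.
Proof.
split.
  move=> H; have [H1 [H2 _]] := proj1 (M1E _ _ _) (H Rp).
  split=> //; split=> // z Hz Hle Hne.
  by case: (proj1 (M1E _ _ _) (H z)) => _ [_ [Hc|//]]; exfalso; apply: Hc.
case=> H1 [H2 H3] z1; apply/M1E; split=> //; split=> //.
case: (classic (rowp z1 /\ yle z1 Rp /\ z1 <> Rp)) => [[a [b c]]|Hn]; last by left.
by right; apply: H3.
Qed.

Lemma M2E pi r d KA z2 z3 z4 : M2 pi r d KA z2 z3 z4 <->
  lt d pi /\ ~ (lt d z2 /\ lt z2 pi) /\ yle KA pi /\ ~ yle KA d /\
  (~ (yle z3 pi /\ ~ yle z3 d) \/ yle KA z3) /\ yle r KA /\ (~ (rowp z4 /\ yle z4 KA) \/ yle z4 r).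
Proof. exact: iff_refl. Qed.

Lemma D2_iff pi r d KA : (forall z2 z3 z4, M2 pi r d KA z2 z3 z4) <-> D2s pi r d KA.
Proof.
split.
  move=> H; have [H1 [_ [H3 [H4 [_ [H6 _]]]]]] := proj1 (M2E _ _ _ _ _ _ _) (H pi pi pi).
  split; first by split=> // s; case: (proj1 (M2E _ _ _ _ _ _ _) (H s pi pi)) => _ [].
  split; first by split=> //; split=> // z Hz Hzd; case: (proj1 (M2E _ _ _ _ _ _ _) (H pi z pi)) => _ [_ [_ [_ [[Hc|//] _]]]]; exfalso; apply: Hc.
  split=> // w Hw Hwk.
  by case: (proj1 (M2E _ _ _ _ _ _ _) (H pi pi w)) => _ [_ [_ [_ [_ [_ [Hc|//]]]]]]; exfalso; apply: Hc.
case=> [[H1 H2] [[H3 [H4 H5]] [H6 H7]]] z2 z3 z4; apply/M2E.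
split=> //; split; first exact: H2.
split=> //; split=> //.
split.
  case: (classic (yle z3 pi /\ ~ yle z3 d)) => [[a b]|Hn]; last by left.
  by right; apply: H5.
split=> //.
case: (classic (rowp z4 /\ yle z4 KA)) => [[a b]|Hn]; last by left.
by right; apply: H7.
Qed.

Lemma M3E pi Rp c KB z5 z6 z7 : M3 pi Rp c KB z5 z6 z7 <->
  lt pi c /\ ~ (lt pi z5 /\ lt z5 c) /\ yle KB c /\ ~ yle KB pi /\
  (~ (yle z6 c /\ ~ yle z6 pi) \/ yle KB z6) /\ yle Rp KB /\ (~ (rowp z7 /\ yle z7 KB) \/ yle z7 Rp).
Proof. exact: iff_refl. Qed.

Lemma D3_iff pi Rp c KB : (forall z5 z6 z7, M3 pi Rp c KB z5 z6 z7) <-> D3s pi Rp c KB.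
Proof.
split.
  move=> H; have [H1 [_ [H3 [H4 [_ [H6 _]]]]]] := proj1 (M3E _ _ _ _ _ _ _) (H pi pi pi).
  split; first by split=> // s; case: (proj1 (M3E _ _ _ _ _ _ _) (H s pi pi)) => _ [].
  split; first by split=> //; split=> // z Hz Hzd; case: (proj1 (M3E _ _ _ _ _ _ _) (H pi z pi)) => _ [_ [_ [_ [[Hc|//] _]]]]; exfalso; apply: Hc.
  split=> // w Hw Hwk.
  by case: (proj1 (M3E _ _ _ _ _ _ _) (H pi pi w)) => _ [_ [_ [_ [_ [_ [Hc|//]]]]]]; exfalso; apply: Hc.
case=> [[H1 H2] [[H3 [H4 H5]] [H6 H7]]] z2 z3 z4; apply/M3E.
split=> //; split; first exact: H2.
split=> //; split=> //.
split.
  case: (classic (yle z3 c /\ ~ yle z3 pi)) => [[a b]|Hn]; last by left.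
  by right; apply: H5.
split=> //.
case: (classic (rowp z4 /\ yle z4 KB)) => [[a b]|Hn]; last by left.
by right; apply: H7.
Qed.

Lemma M4E CA KA w9 z8 w10 : M4 CA KA w9 z8 w10 <->
  (~ (rowp w9 /\ yle w9 CA) \/ yle w9 part11) /\ yle CA KA /\
  ((rowp w10 /\ yle w10 z8 /\ ~ yle w10 part11) \/ ~ yle z8 KA \/ yle z8 CA).
Proof. exact: iff_refl. Qed.

Lemma not_colp z : ~ colp z -> exists w, rowp w /\ yle w z /\ ~ yle w part11.
Proof.
move=> H; apply: NNPP => Hn; apply: H => w Hw Hwz; apply: NNPP => Hc.
by apply: Hn; exists w.
Qed.

Lemma D4_iff CA KA : (forall w9 z8, exists w10, M4 CA KA w9 z8 w10) <-> D4s CA KA.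
Proof.
split.
  move=> H; have [w10 /M4E [_ [H2 _]]] := H CA CA.
  split.
    move=> w Hw Hwc; have [w10' /M4E [[Hc|//] _]] := H w CA.
    by exfalso; apply: Hc.
  split=> // z Hz Hzk; have [w10' /M4E [_ [_ [[a [b c]]|[Hc|//]]]]] := H CA z.
    by exfalso; apply: c; apply: Hz.
  by exfalso; apply: Hc.
case=> H1 [H2 H3] w9 z8.
have P1 : ~ (rowp w9 /\ yle w9 CA) \/ yle w9 part11.
  case: (classic (rowp w9 /\ yle w9 CA)) => [[a b]|Hn]; last by left.
  by right; apply: H1.
case: (classic (colp z8)) => Hz.
  exists z8; apply/M4E; split=> //; split=> //; right.
  case: (classic (yle z8 KA)) => Hk; last by left.
  by right; apply: H3.
have [w [a [b c]]] := not_colp Hz.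
by exists w; apply/M4E; split=> //; split=> //; left.
Qed.

Lemma M6E s KB RB w14 z15 u v w16 t : M6 s KB RB w14 z15 u v w16 t <->
  yle s RB /\ (~ (rowp w14 /\ yle w14 RB) \/ yle w14 s) /\
  ((rowp w16 /\ yle w16 z15 /\ ~ yle w16 part11) \/ ((~ yle z15 RB \/ yle z15 KB) /\ (~ yle z15 KB \/ yle z15 RB))) /\
  (~ (lt u RB /\ lt v RB) \/ (yle u t /\ yle v t /\ lt t RB)).
Proof. exact: iff_refl. Qed.

Lemma D6_iff s KB RB : (forall w14 z15 u v, exists w16 t, M6 s KB RB w14 z15 u v w16 t) <-> D6s s KB RB.
Proof.
split.
  move=> H; have [w16 [t /M6E [H1 _]]] := H RB RB RB RB.
  split=> //; split.
    move=> w Hw Hwr; have [w16' [t' /M6E [_ [[Hc|//] _]]]] := H w RB RB RB.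
    by exfalso; apply: Hc.
  split.
    move=> z Hz; have [w16' [t' /M6E [_ [_ [[[a [b c]]|[E1 E2]] _]]]]] := H RB z RB RB.
      by exfalso; apply: c; apply: Hz.
    split=> Hc.
      by case: E1 => // Hc'; exfalso; exact: Hc' Hc.
    by case: E2 => // Hc'; exfalso; exact: Hc' Hc.
  move=> u v Hu Hv; have [w16' [t' /M6E [_ [_ [_ [Hc|Ht]]]]]] := H RB RB u v.
    by exfalso; apply: Hc.
  by exists t'.
case=> H1 [H2 [H3 H4]] w14 z15 u v.
have P2 : ~ (rowp w14 /\ yle w14 RB) \/ yle w14 s.
  case: (classic (rowp w14 /\ yle w14 RB)) => [[a b]|Hn]; last by left.
  by right; apply: H2.
have [t P4] : exists t, ~ (lt u RB /\ lt v RB) \/ (yle u t /\ yle v t /\ lt t RB).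
  case: (classic (lt u RB /\ lt v RB)) => [[a b]|Hn]; last by exists u; left.
  by have [t Ht] := H4 _ _ a b; exists t; right.
case: (classic (colp z15)) => Hz.
  exists z15, t; apply/M6E; split=> //; split=> //; split=> //; right.
  have E := H3 _ Hz.
  split; [case: (classic (yle z15 RB)) => Hk; [right; exact: (proj1 E) | by left]
        | case: (classic (yle z15 KB)) => Hk; [right; exact: (proj2 E) | by left]].
have [w [a [b c]]] := not_colp Hz.
by exists w, t; apply/M6E; split=> //; split=> //; split=> //; left.
Qed.

Lemma M7E x y w s s' vv : M7 x y w s s' vv <->
  ~ (lt w y /\ ~ (lt w s /\ lt s y) /\ lt y x /\ ~ (lt y s' /\ lt s' x)) \/
  (yle w vv /\ yle vv x /\ vv <> w /\ vv <> x /\ vv <> y).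
Proof. exact: iff_refl. Qed.

Lemma D7_iff x : (forall y w, exists s s' vv, M7 x y w s s' vv) <-> D7s x.
Proof.
split.
  move=> H y w [Hwy Hwy'] [Hyx Hyx'].
  have [s [s' [vv /M7E [Hc|Hv]]]] := H y w; last by exists vv.
  exfalso; apply: Hc; split; first exact: Hwy.
  split; first exact: Hwy'.
  split; first exact: Hyx.
  exact: Hyx'.
move=> H y w.
case: (classic (cov w y /\ cov y x)) => [[Hwy Hyx]|Hn].
  have [vv Hv] := H _ _ Hwy Hyx; by exists y, y, vv; apply/M7E; right.
case: (classic (lt w y)) => Hwy; last by exists y, y, y; apply/M7E; left; case.
case: (classic (lt y x)) => Hyx; last by exists y, y, y; apply/M7E; left; case=> _ [_ []].
case: (classic (exists s, lt w s /\ lt s y)) => [[s Hs]|Hns].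
  by exists s, y, y; apply/M7E; left; case=> _ [Hc _]; apply: Hc.
case: (classic (exists s, lt y s /\ lt s x)) => [[s Hs]|Hns'].
  by exists y, s, y; apply/M7E; left; case=> _ [_ [_ Hc]]; apply: Hc.
exfalso; apply: Hn; split; split=> // s Hs; [apply: Hns | apply: Hns']; by exists s.
Qed.

Lemma MBE CA RB x : MB CA RB x <-> (yle CA x <-> yle RB x).
Proof.
change ((~ yle CA x \/ yle RB x) /\ (~ yle RB x \/ yle CA x) <-> (yle CA x <-> yle RB x)).
split.
  case=> H1 H2; split=> H.
    by case: H1 => // H1; exfalso; exact: H1 H.
  by case: H2 => // H2; exfalso; exact: H2 H.
case=> H1 H2; split.
  by case: (classic (yle CA x)) => H; [right; exact: H1 | left].
by case: (classic (yle RB x)) => H; [right; exact: H2 | left].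
Qed.

Lemma MEE s r pi a d KA z2 z3 z4 : ME s r pi a d KA z2 z3 z4 <->
  rowp s /\ rowp r /\ ~ yle s a /\ M2 pi r d KA z2 z3 z4.
Proof. exact: iff_refl. Qed.

Notation P0 := part11.

Lemma ex_or1 (P : Prop) (Q : partition -> Prop) : (P <-> forall z, Q z) -> exists z, P \/ ~ Q z.
Proof.
move=> E; case: (classic P) => HP; first by exists P0; left.
have : ~ forall z, Q z by move=> H; apply: HP; apply/E.
by case/not_all_ex_not => z Hz; exists z; right.
Qed.

Lemma ex_or3 (P : Prop) (Q : partition -> partition -> partition -> Prop) :
  (P <-> forall a b c, Q a b c) -> exists a b c, P \/ ~ Q a b c.
Proof.
move=> E; case: (classic P) => HP; first by exists P0, P0, P0; left.
apply: NNPP => Hn; apply: HP; apply/E => a b c; apply: NNPP => Hq; apply: Hn.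
by exists a, b, c; right.
Qed.

Lemma ex_or21 (P : Prop) (Q : partition -> partition -> partition -> Prop) :
  (P <-> forall a b, exists c, Q a b c) -> exists a b, P \/ forall c, ~ Q a b c.
Proof.
move=> E; case: (classic P) => HP; first by exists P0, P0; left.
apply: NNPP => Hn; apply: HP; apply/E => a b; apply: NNPP => Hq; apply: Hn.
by exists a, b; right => c Hc; apply: Hq; exists c.
Qed.

Lemma ex_or42 (P : Prop) (Q : partition -> partition -> partition -> partition -> partition -> partition -> Prop) :
  (P <-> forall a b c d, exists e f, Q a b c d e f) -> exists a b c d, P \/ forall e f, ~ Q a b c d e f.
Proof.
move=> E; case: (classic P) => HP; first by exists P0, P0, P0, P0; left.
apply: NNPP => Hn; apply: HP; apply/E => a b c d; apply: NNPP => Hq; apply: Hn.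
by exists a, b, c, d; right => e f Hc; apply: Hq; exists e, f.
Qed.

Lemma ex_or23 (P : Prop) (Q : partition -> partition -> partition -> partition -> partition -> Prop) :
  (P <-> forall a b, exists c d e, Q a b c d e) -> exists a b, P \/ forall c d e, ~ Q a b c d e.
Proof.
move=> E; case: (classic P) => HP; first by exists P0, P0; left.
apply: NNPP => Hn; apply: HP; apply/E => a b; apply: NNPP => Hq; apply: Hn.
by exists a, b; right => c d e Hc; apply: Hq; exists c, d, e.
Qed.

Lemma logic (r s pi : partition) :
  (forall Rp d KA c KB CA RB x : partition,
  exists z1 z2 z3 z4 z5 z6 z7 w9 z8 w14 z15 u v y w a d' KA' : partition,
  forall w10 w16 t s0 s' vv z2' z3' z4' : partition,
  ((~ M1 r Rp z1 \/ ~ M2 pi r d KA z2 z3 z4 \/ ~ M3 pi Rp c KB z5 z6 z7 \/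
    ~ M4 CA KA w9 z8 w10 \/ ~ M6 s KB RB w14 z15 u v w16 t \/ ~ M7 x y w s0 s' vv \/ MB CA RB x)
   /\ ME s r pi a d' KA' z2' z3' z4')) <->
  ((forall Rp d KA c KB CA RB x, D1s r Rp -> D2s pi r d KA -> D3s pi Rp c KB -> D4s CA KA ->
      D6s s KB RB -> D7s x -> (yle CA x <-> yle RB x)) /\
   (rowp s /\ rowp r /\ (exists a, ~ yle s a) /\ exists d KA, D2s pi r d KA)).
Proof.
split.
  move=> H; split.
    move=> Rp d KA c KB CA RB x h1 h2 h3 h4 h6 h7.
    have [z1 [z2 [z3 [z4 [z5 [z6 [z7 [w9 [z8 [w14 [z15 [u [v [y [w [a [d' [KA' HZ]]]]]]]]]]]]]]]]]] := H Rp d KA c KB CA RB x.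
    have [w10 G4] := proj2 (D4_iff _ _) h4 w9 z8.
    have [w16 [t G6]] := proj2 (D6_iff _ _ _) h6 w14 z15 u v.
    have [s0 [s' [vv G7]]] := proj2 (D7_iff _) h7 y w.
    have [HM _] := HZ w10 w16 t s0 s' vv P0 P0 P0.
    apply/MBE.
    case: HM => [Hc|HM]; first by exfalso; apply: Hc; apply: (proj2 (D1_iff _ _) h1).
    case: HM => [Hc|HM]; first by exfalso; apply: Hc; apply: (proj2 (D2_iff _ _ _ _) h2).
    case: HM => [Hc|HM]; first by exfalso; apply: Hc; apply: (proj2 (D3_iff _ _ _ _) h3).
    case: HM => [Hc|HM]; first by exfalso; apply: Hc.
    case: HM => [Hc|HM]; first by exfalso; apply: Hc.
    case: HM => [Hc|HM]; first by exfalso; apply: Hc.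
    exact: HM.
  have [z1 [z2 [z3 [z4 [z5 [z6 [z7 [w9 [z8 [w14 [z15 [u [v [y [w [a [d' [KA' HZ]]]]]]]]]]]]]]]]]] := H P0 P0 P0 P0 P0 P0 P0 P0.
  have [_ /MEE [Hs [Hr [Ha _]]]] := HZ P0 P0 P0 P0 P0 P0 P0 P0 P0.
  split=> //; split=> //; split; first by exists a.
  exists d', KA'; apply/D2_iff => z2' z3' z4'.
  by have [_ /MEE [_ [_ [_ HM]]]] := HZ P0 P0 P0 P0 P0 P0 z2' z3' z4'.
case=> HA [Hs [Hr [[a Ha] [d0 [KA0 HD0]]]]] Rp d KA c KB CA RB x.
have [z1 W1] := ex_or1 (iff_sym (D1_iff r Rp)).
have [z2 [z3 [z4 W2]]] := ex_or3 (iff_sym (D2_iff pi r d KA)).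
have [z5 [z6 [z7 W3]]] := ex_or3 (iff_sym (D3_iff pi Rp c KB)).
have [w9 [z8 W4]] := ex_or21 (iff_sym (D4_iff CA KA)).
have [w14 [z15 [u [v W6]]]] := ex_or42 (iff_sym (D6_iff s KB RB)).
have [y [w W7]] := ex_or23 (iff_sym (D7_iff x)).
exists z1, z2, z3, z4, z5, z6, z7, w9, z8, w14, z15, u, v, y, w, a, d0, KA0.
move=> w10 w16 t s0 s' vv z2' z3' z4'.
split; last first.
  apply/MEE; split=> //; split=> //; split=> //.
  exact: (proj2 (D2_iff _ _ _ _) HD0).
case: W1 => [h1|n1]; last by left.
case: W2 => [h2|n2]; last by right; left.
case: W3 => [h3|n3]; last by right; right; left.
case: W4 => [h4|n4]; last by right; right; right; left; apply: n4.
case: W6 => [h6|n6]; last by right; right; right; right; left; apply: n6.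
case: W7 => [h7|n7]; last by right; right; right; right; right; left; apply: n7.
by right; right; right; right; right; right; apply/MBE; exact: (HA _ _ _ _ _ _ _ _ h1 h2 h3 h4 h6 h7).
Qed.

Lemma row_single' p : rowp p -> 0 < pf p 0 -> sval p = [:: pf p 0].
Proof.
move=> /rowp_iff H1 H2.
have Hl1 : len p <= 1 by rewrite leqNgt -pf_pos H1.
move: H1 H2 Hl1; rewrite /pf /len; case: (sval p) => [|x [|y l]] //=.
Qed.

Lemma row_single p : (exists n, sval p = [:: n]) <-> rowp p /\ 0 < pf p 0.
Proof.
split.
  case=> n Hn; split.
    by apply/rowp_iff; rewrite /pf Hn.
  rewrite pf_pos /len Hn; by [].
case=> /rowp_iff H1 H2; exists (pf p 0).
have Hl1 : len p <= 1 by rewrite leqNgt -pf_pos H1.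
move: H1 H2 Hl1; rewrite /pf /len; case: (sval p) => [|x [|y l]] //=.
Qed.

Lemma nonempty p : (exists a, ~ yle p a) <-> 0 < pf p 0.
Proof.
split.
  case=> a Ha; rewrite lt0n; apply/eqP => H; apply: Ha; apply/yle_pf => i.
  by rewrite (le_pf0 H).
move=> H; exists (rect 0 0) => /yle_pf /(_ 0); rewrite pf_rect /=; lia.
Qed.

Lemma sem (r s pi : partition) : rel_3_11 r s pi <->
  ((forall Rp d KA c KB CA RB x, D1s r Rp -> D2s pi r d KA -> D3s pi Rp c KB -> D4s CA KA ->
      D6s s KB RB -> D7s x -> (yle CA x <-> yle RB x)) /\
   (rowp s /\ rowp r /\ (exists a, ~ yle s a) /\ exists d KA, D2s pi r d KA)).
Proof.
split.
  case=> n [r0 [Hs [Hr Hc]]].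
  have [Hsr Hs0] := proj1 (row_single s) (ex_intro _ n Hs).
  have [Hrr Hr0] := proj1 (row_single r) (ex_intro _ r0 Hr).
  have En : pf s 0 = n by rewrite /pf Hs.
  have Er : pf r 0 = r0 by rewrite /pf Hr.
  rewrite count_mem_cnt in Hc.
  have Hlt : cnt pi r0.+1 < cnt pi r0 by rewrite En in Hs0; lia.
  split; last first.
    split=> //; split=> //; split; first by apply/nonempty.
    have Hlt' : cnt pi (pf r 0).+1 < cnt pi (pf r 0) by rewrite Er.
    by have [d Hd] := D2s_ex (pi := pi) Hrr Hr0 Hlt'; exists d, (rect (cnt pi (pf r 0)) (pf r 0)).
  move=> Rp d KA c KB CA RB x h1 h2 h3 h4 h6 h7.
  have ERp := proj1 (D1s_iff Rp Hrr) h1; rewrite Er in ERp; subst Rp.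
  have [_ [_ EKA]] := D2s_sem Hrr h2; rewrite Er in EKA; subst KA.
  have EKB := D3s_sem h3; subst KB.
  have ECA := proj1 (D4s_iff _ _) h4; rewrite len_rect in ECA; last by rewrite -Er.
  subst CA.
  have HKB : 0 < len (rect (cnt pi r0.+1).+1 r0.+1) by rewrite len_rect.
  have ERB := proj1 (D6s_iff RB Hsr Hs0 HKB) h6; rewrite len_rect // En in ERB; subst RB.
  have [m Em] := proj1 (D7s_iff x) h7; subst x.
  rewrite !rect_stair //; try lia.
move=> [HA [Hs [Hr [Hne [d0 [KA0 HD0]]]]]].
have Hs0 := proj1 (nonempty s) Hne.
have [Hr0 [Hlt EKA]] := D2s_sem Hr HD0.
set r0 := pf r 0 in Hr0 Hlt EKA.
set n := pf s 0 in Hs0.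
set A := cnt pi r0 in Hlt EKA.
set B := cnt pi r0.+1 in Hlt.
have [c Hc] := D3s_ex Hlt Hr0.
have h1 : D1s r (rect 1 r0.+1) by apply/(D1s_iff _ Hr).
have h4 : D4s (rect A 1) KA0 by apply/D4s_iff; rewrite EKA len_rect.
have HKB : 0 < len (rect B.+1 r0.+1) by rewrite len_rect.
have h6 : D6s s (rect B.+1 r0.+1) (rect B.+1 n) by apply/(D6s_iff _ Hs Hs0 HKB); rewrite len_rect.
have Hm : forall m, A <= m <-> B + n <= m.
  have HA0 : 0 < A by lia.
  move=> m; have := HA _ _ _ _ _ _ _ (stair m) h1 HD0 Hc h4 h6 (@stair_D7 m).
  rewrite !rect_stair //; lia.
have EA : A = B + n.
  apply/eqP; rewrite eqn_leq; apply/andP; split; [apply/(Hm (B + n)) | apply/(Hm A)] => //.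
exists n, r0; split; first exact: row_single'.
split; first exact: row_single'.
by rewrite count_mem_cnt -/A -/B EA; lia.
Qed.


Theorem proposition3p11 : Pi_definable3 3 rel_3_11.
Proof.
exists [:: Ublk; Xblk; Zblk], Mat; split => // e.
apply: iff_trans (sem _ _ _) _; apply: iff_sym.
apply: iff_trans (key e) _.
exact: logic.
Qed.
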